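(* Let $b$ be a solvable board position on the 37-hole hexagon board $H_X$. Suppose $b$ is invariant under the $180^\circ$ rotation $(a,b)\mapsto(-a,-b)$, or invariant under at least one diagonal reflection. This covers exactly symmetry types 1, 2, 3, 5, 7, 8 of the hexagon board: - full hexagonal symmetry; - $60^\circ$ rotation; - $120^\circ$ rotation together with a diagonal reflection; - both an orthogonal and the perpendicular diagonal reflection; - $180^\circ$ rotation; - a single diagonal reflection. Then $b$ lies in position class A.
   Context: Use axial coordinates on the triangular lattice. The hexagon board is $H_X=\{(a,c)\in\mathbb{Z}^2: |a|\le3,\ |c|\le3,\ |a+c|\le3\}$, which has 37 holes. The lattice lines are the lines in the three directions $(1,0),(0,1),(1,-1)$. A board position is a subset of $H_X$ (the occupied holes). A jump: given $d\in\{\pm(1,0),\pm(0,1),\pm(1,-1)\}$ and $p$ with $p,p+d,p+2d\in H_X$, $p,p+d$ occupied and $p+2d$ empty, the jump removes the pegs at $p,p+d$ and places a peg at $p+2d$. A position is solvable if some sequence of jumps leads to exactly one peg. The symmetries of $H_X$ form the dihedral group of order 12 of the regular hexagon, about the centre $(0,0)$. A reflection is called orthogonal if its mirror line is parallel to a lattice line. It is called diagonal if its mirror line is perpendicular to a lattice line. Position class A. For $i\in\{0,1,2\}$ let $N_i$ be the number of pegs of $b$ at holes $(a,c)$ with $a-c\equiv i\pmod 3$. The position $b$ lies in position class A if $N_1+N_2$ is even and $N_0+N_2$ and $N_0+N_1$ are odd. This is the position class of a single peg at $(0,0)$. *)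

(* Defs.v *)
From Stdlib Require Import Bool ZArith List Relations.
Import ListNotations.
Open Scope Z_scope.

(* Axial coordinates (a,c); basis e1 = (1,0) at 0 degrees, e2 = (0,1) at 60 degrees,
   so that the lattice directions are (1,0), (0,1), (1,-1). *)
Definition pt := (Z * Z)%type.

Definition inH (p : pt) : bool :=
  let '(a, c) := p in
  (Z.abs a <=? 3) && (Z.abs c <=? 3) && (Z.abs (a + c) <=? 3).

Definition rng : list Z := map (fun n => Z.of_nat n - 3) (seq 0 7).

Definition holes : list pt := filter inH (list_prod rng rng).

Definition position := pt -> bool.

Definition is_position (b : position) : Prop := forall p, b p = true -> inH p = true.

Definition padd (p q : pt) : pt := (fst p + fst q, snd p + snd q).

Definition dirs : list pt := [(1,0); (-1,0); (0,1); (0,-1); (1,-1); (-1,1)].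

Definition pt_eqb (p q : pt) : bool := (fst p =? fst q) && (snd p =? snd q).

Definition jump (b b' : position) : Prop :=
  exists d p, In d dirs /\
    inH p = true /\ inH (padd p d) = true /\ inH (padd (padd p d) d) = true /\
    b p = true /\ b (padd p d) = true /\ b (padd (padd p d) d) = false /\
    forall q, b' q =
      if orb (pt_eqb q p) (pt_eqb q (padd p d)) then false
      else if pt_eqb q (padd (padd p d) d) then true
      else b q.

Definition npegs (b : position) : nat := length (filter b holes).

Definition solvable (b : position) : Prop :=
  exists b', clos_refl_trans position jump b b' /\ npegs b' = 1%nat.

Definition Ncls (b : position) (i : Z) : nat :=
  length (filter (fun p : pt => andb (b p) ((fst p - snd p) mod 3 =? i)) holes).

Definition classA (b : position) : Prop :=
  Nat.even (Ncls b 1 + Ncls b 2) = true /\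
  Nat.odd (Ncls b 0 + Ncls b 2) = true /\
  Nat.odd (Ncls b 0 + Ncls b 1) = true.

Definition rot180 (p : pt) : pt := (- fst p, - snd p).

(* The three diagonal reflections (mirror line perpendicular to a lattice line):
   mirror at 30 deg (perp. to (1,-1)): (a,c) |-> (c,a);
   mirror at 90 deg (perp. to (1,0)):  (a,c) |-> (-a-c,c);
   mirror at 150 deg (perp. to (0,1)): (a,c) |-> (a,-a-c). *)
Definition diag_refl1 (p : pt) : pt := (snd p, fst p).
Definition diag_refl2 (p : pt) : pt := (- fst p - snd p, snd p).
Definition diag_refl3 (p : pt) : pt := (fst p, - fst p - snd p).

Definition invariant (b : position) (g : pt -> pt) : Prop := forall p, b (g p) = b p.

(* Main.v *)
Require Import Defs.
From Stdlib Require Import ZArith List Relations.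
From Stdlib Require Import Bool Permutation Lia.
Import ListNotations.
Open Scope Z_scope.

Lemma pt_eqb_true q p : pt_eqb q p = true -> q = p.
Proof.
  destruct q, p; unfold pt_eqb; simpl; rewrite andb_true_iff, !Z.eqb_eq.
  intros [-> ->]; reflexivity.
Qed.

Lemma pt_eqb_refl p : pt_eqb p p = true.
Proof. destruct p; unfold pt_eqb; simpl; rewrite !Z.eqb_refl; reflexivity. Qed.

Lemma len_filter_xor (l : list pt) (f g : pt -> bool) :
  Nat.odd (length (filter g l)) =
  xorb (Nat.odd (length (filter f l))) (Nat.odd (length (filter (fun x => xorb (f x) (g x)) l))).
Proof.
  induction l as [|x l IH]; simpl; [reflexivity|].
  destruct (f x), (g x); simpl; rewrite ?Nat.odd_succ, <- ?Nat.negb_odd, IH;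
  destruct (Nat.odd (length (filter f l))), (Nat.odd (length (filter (fun x => xorb (f x) (g x)) l))); reflexivity.
Qed.

Lemma filter_ext_l (l : list pt) (f g : pt -> bool) :
  (forall x, f x = g x) -> filter f l = filter g l.
Proof. intro H; induction l; simpl; [reflexivity| rewrite H, IHl; reflexivity]. Qed.

Definition T (p d : pt) (x : pt) : bool :=
  orb (orb (pt_eqb x p) (pt_eqb x (padd p d))) (pt_eqb x (padd (padd p d) d)).

Definition check_T : bool :=
  forallb (fun p => forallb (fun d =>
    negb (inH (padd p d)) || negb (inH (padd (padd p d) d)) ||
    forallb (fun i => Nat.odd (length (filter (fun x => T p d x && ((fst x - snd x) mod 3 =? i)) holes)))
      [0;1;2]) dirs) holes.

Lemma check_T_ok : check_T = true.
Proof. vm_compute. reflexivity. Qed.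

Lemma in_rng a : Z.abs a <= 3 -> In a rng.
Proof.
  intro H. assert (a = -3 \/ a = -2 \/ a = -1 \/ a = 0 \/ a = 1 \/ a = 2 \/ a = 3) by lia.
  unfold rng; simpl; lia.
Qed.

Lemma inH_holes p : inH p = true -> In p holes.
Proof.
  intro H. unfold holes. apply filter_In. split; [|exact H].
  destruct p as [a c]. unfold inH in H. rewrite !andb_true_iff, !Z.leb_le in H.
  apply in_prod; apply in_rng; lia.
Qed.

Lemma jump_flip b b' : jump b b' -> forall i, In i [0;1;2] ->
  Nat.odd (Ncls b' i) = negb (Nat.odd (Ncls b i)).
Proof.
  intros (d & p & Hd & Hp & Hp1 & Hp2 & Hb0 & Hb1 & Hb2 & Hb') i Hi.
  unfold Ncls.
  rewrite (len_filter_xor _ (fun p0 => b p0 && ((fst p0 - snd p0) mod 3 =? i))).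
  rewrite (filter_ext_l _ (fun x =>
           xorb (b x && ((fst x - snd x) mod 3 =? i))
             (b' x && ((fst x - snd x) mod 3 =? i))) (fun x => T p d x && ((fst x - snd x) mod 3 =? i))).
  - pose proof check_T_ok as C. unfold check_T in C.
    rewrite forallb_forall in C. specialize (C p (inH_holes _ Hp)).
    rewrite forallb_forall in C. specialize (C d Hd).
    rewrite Hp1, Hp2 in C. cbn [negb orb] in C.
    rewrite forallb_forall in C. rewrite (C i Hi).
    apply xorb_true_r.
  - intro x. rewrite Hb'. unfold T.
    destruct ((fst x - snd x) mod 3 =? i); [|rewrite !andb_false_r; reflexivity].
    rewrite !andb_true_r.
    destruct (pt_eqb x p) eqn:E1; simpl.
    { apply pt_eqb_true in E1; subst. rewrite Hb0. reflexivity. }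
    destruct (pt_eqb x (padd p d)) eqn:E2; simpl.
    { apply pt_eqb_true in E2; subst. rewrite Hb1. reflexivity. }
    destruct (pt_eqb x (padd (padd p d) d)) eqn:E3; simpl.
    { apply pt_eqb_true in E3; subst. rewrite Hb2. reflexivity. }
    destruct (b x); reflexivity.
Qed.

Lemma rt_flip b b' : clos_refl_trans position jump b b' ->
  exists k, forall i, In i [0;1;2] -> Nat.odd (Ncls b' i) = xorb k (Nat.odd (Ncls b i)).
Proof.
  induction 1 as [x y H|x|x y z _ [k1 IH1] _ [k2 IH2]].
  - exists true. intros i Hi. rewrite (jump_flip _ _ H i Hi). reflexivity.
  - exists false. reflexivity.
  - exists (xorb k1 k2). intros i Hi. rewrite IH2, IH1 by exact Hi.
    destruct k1, k2, (Nat.odd (Ncls x i)); reflexivity.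
Qed.

Lemma partition (b : position) (l : list pt) :
  length (filter b l) =
  (length (filter (fun p => andb (b p) ((fst p - snd p) mod 3 =? 0)%Z) l) +
   length (filter (fun p => andb (b p) ((fst p - snd p) mod 3 =? 1)%Z) l) +
   length (filter (fun p => andb (b p) ((fst p - snd p) mod 3 =? 2)%Z) l))%nat.
Proof.
  induction l as [|x l IH]; simpl; [reflexivity|].
  assert (Hm := Z.mod_pos_bound (fst x - snd x) 3 ltac:(lia)).
  destruct (b x); simpl; [|exact IH].
  assert (E : (fst x - snd x) mod 3 = 0 \/ (fst x - snd x) mod 3 = 1 \/ (fst x - snd x) mod 3 = 2) by lia.
  destruct E as [E|[E|E]]; rewrite E; simpl; lia.
Qed.

Fixpoint nodupb (l : list pt) : bool :=
  match l with [] => true | x :: t => negb (existsb (pt_eqb x) t) && nodupb t end.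

Lemma nodupb_ok l : nodupb l = true -> NoDup l.
Proof.
  induction l as [|x t IH]; simpl; intro H; constructor.
  - rewrite andb_true_iff, negb_true_iff in H. destruct H as [H _].
    intro Hin. assert (existsb (pt_eqb x) t = true).
    { apply existsb_exists. exists x. split; [exact Hin| apply pt_eqb_refl]. }
    congruence.
  - apply IH. rewrite andb_true_iff in H; tauto.
Qed.

Lemma perm_len_filter (f : pt -> bool) l l' : Permutation l l' ->
  length (filter f l) = length (filter f l').
Proof.
  induction 1; simpl; try reflexivity.
  - destruct (f x); simpl; congruence.
  - destruct (f x), (f y); reflexivity.
  - congruence.
Qed.

Definition check_sym (g : pt -> pt) : bool :=
  nodupb (map g holes) &&
  forallb (fun y => existsb (pt_eqb (g y)) holes) holes &&
  forallb (fun x => Bool.eqb ((fst (g x) - snd (g x)) mod 3 =? 2) ((fst x - snd x) mod 3 =? 1)) holes.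

Lemma sym_N12 (g : pt -> pt) (b : position) : check_sym g = true -> invariant b g ->
  Ncls b 1 = Ncls b 2.
Proof.
  intros C Hinv. unfold check_sym in C. rewrite !andb_true_iff in C.
  destruct C as [[C1 C2] C3].
  rewrite forallb_forall in C2, C3.
  unfold Ncls.
  assert (E : filter (fun p => b p && ((fst p - snd p) mod 3 =? 1)) holes =
              filter (fun p => b (g p) && ((fst (g p) - snd (g p)) mod 3 =? 2)) holes).
  { assert (forall l, incl l holes ->
      filter (fun p => b p && ((fst p - snd p) mod 3 =? 1)) l =
      filter (fun p => b (g p) && ((fst (g p) - snd (g p)) mod 3 =? 2)) l) as G.
    { induction l as [|x l IH]; intro Hl; simpl; [reflexivity|].
      rewrite Hinv.
      pose proof (C3 x (Hl x (or_introl eq_refl))) as Cx. apply Bool.eqb_prop in Cx.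
      rewrite Cx, IH by (intros y Hy; apply Hl; right; exact Hy). reflexivity. }
    apply G. intros y Hy; exact Hy. }
  rewrite E.
  transitivity (length (filter (fun p => b p && ((fst p - snd p) mod 3 =? 2)) (map g holes))).
  { rewrite filter_map_swap, length_map. reflexivity. }
  apply perm_len_filter. apply Permutation_map_same_l.
  - apply nodupb_ok; exact C1.
  - intros y Hy. apply in_map_iff in Hy. destruct Hy as [x [<- Hx]].
    destruct (proj1 (existsb_exists _ _) (C2 x Hx)) as [z [Hz Ez]].
    apply pt_eqb_true in Ez. rewrite Ez. exact Hz.
Qed.

Lemma sym_all : check_sym rot180 = true /\ check_sym diag_refl1 = true /\ check_sym diag_refl2 = true /\ check_sym diag_refl3 = true.
Proof. vm_compute. repeat split. Qed.

Theorem theorem3 (b : position) :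
  is_position b ->
  solvable b ->
  (invariant b rot180 \/ invariant b diag_refl1 \/ invariant b diag_refl2 \/
   invariant b diag_refl3) ->
  classA b.
Proof.
  intros _ [b' [Hrt Hn]] Hsym.
  assert (N12 : Ncls b 1 = Ncls b 2).
  { destruct sym_all as (S1 & S2 & S3 & S4).
    destruct Hsym as [H|[H|[H|H]]]; first [exact (sym_N12 _ _ S1 H) | exact (sym_N12 _ _ S2 H) | exact (sym_N12 _ _ S3 H) | exact (sym_N12 _ _ S4 H)]. }
  destruct (rt_flip _ _ Hrt) as [k Hk].
  pose proof (Hk 0 (or_introl eq_refl)) as K0.
  pose proof (Hk 1 (or_intror (or_introl eq_refl))) as K1.
  pose proof (Hk 2 (or_intror (or_intror (or_introl eq_refl)))) as K2.
  unfold npegs in Hn. rewrite partition in Hn. change (Ncls b' 0 + Ncls b' 1 + Ncls b' 2 = 1)%nat in Hn.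
  rewrite <- N12 in K2.
  unfold classA. rewrite <- Nat.negb_odd, !Nat.odd_add, <- N12.
  revert K0 K1 K2. generalize (Nat.odd (Ncls b 0)) (Nat.odd (Ncls b 1)). intros o0 o1.
  destruct (Ncls b' 0) as [|[|]], (Ncls b' 1) as [|[|]],
    (Ncls b' 2) as [|[|]]; simpl in Hn; try lia;
  destruct k, o0, o1; simpl; intros; try discriminate; auto.
Qed.
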